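(* Let $\Bbbk$ be a field of characteristic zero. For every $\lambda\in\Bbbk^*$, the Lie algebra $\mathcal O(\lambda)$ is not perfect, and therefore is not simple.
   Context: $\mathcal W=\Bbbk[t,t^{-1}]\partial$ is the Witt algebra with basis $L_n=-t^{n+1}\partial$ and $[L_n,L_m]=(n-m)L_{n+m}$. For $\lambda\in\Bbbk^*$, $\mathcal O(\lambda)$ is the subalgebra spanned by $L_n-\lambda^nL_{-n}$, $n\ge1$. A Lie algebra $\mathfrak g$ is perfect if $[\mathfrak g,\mathfrak g]=\mathfrak g$. *)

(* Defs.v *)
From HB Require Import structures.
From mathcomp Require Import all_boot all_order all_algebra.
From mathcomp Require Import finmap.
Set Implicit Arguments. Unset Strict Implicit. Unset Printing Implicit Defensive.
Import Order.TTheory GRing.Theory Num.Theory.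
Local Open Scope ring_scope.

(* The Witt algebra W = k[t,t^-1] d over a field k, described in the basis
   (L_n)_{n in Z}: an element is a finitely supported family of coordinates
   int -> k, the coordinate at n being the coefficient of L_n.
   The bracket is [L_a, L_b] = (a - b) L_(a+b), extended bilinearly. *)
Definition Witt (k : fieldType) := {fsfun int -> k with 0}.

Section Witt.
Variable k : fieldType.
Implicit Types (f g : Witt k) (c : k).

Definition wzero : Witt k := [fsfun with 0].

Definition wadd f g : Witt k :=
  [fsfun n in (finsupp f `|` finsupp g)%fset => f n + g n].

Definition wscale c f : Witt k :=
  [fsfun n in finsupp f => c * f n].

Definition wsum (s : seq (Witt k)) : Witt k := foldr wadd wzero s.

Definition wbr f g : Witt k :=
  [fsfun n in [fset (a + b)%R | a in finsupp f, b in finsupp g]%fset =>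
     \sum_(a <- finsupp f) \sum_(b <- finsupp g | (a + b)%R == n)
        ((a - b)%:~R * f a * g b)].

Definition Lb (n : int) : Witt k := [fsfun m in [fset n]%fset => 1].

Definition Ogen (lam : k) (n : nat) : Witt k :=
  wadd (Lb n%:Z) (wscale (- lam ^+ n) (Lb (- n%:Z))).

(* membership in O(lam) = span of L_n - lam^n L_{-n}, n >= 1
   (pairs (c, m) stand for c * (L_{m+1} - lam^{m+1} L_{-(m+1)})) *)
Definition inO (lam : k) (x : Witt k) : Prop :=
  exists s : seq (k * nat), x = wsum [seq wscale p.1 (Ogen lam p.2.+1) | p <- s].

Definition inDerO (lam : k) (x : Witt k) : Prop :=
  exists s : seq (Witt k * Witt k),
    (forall p, p \in s -> inO lam p.1 /\ inO lam p.2) /\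
    x = wsum [seq wbr p.1 p.2 | p <- s].

Definition O_perfect (lam : k) : Prop := forall x, inO lam x <-> inDerO lam x.

Definition O_ideal (lam : k) (I : Witt k -> Prop) : Prop :=
  [/\ forall x, I x -> inO lam x,
      I wzero,
      (forall x y, I x -> I y -> I (wadd x y)),
      (forall c x, I x -> I (wscale c x)) &
      (forall x y, inO lam x -> I y -> I (wbr x y))].

Definition O_simple (lam : k) : Prop :=
  (exists x y, [/\ inO lam x, inO lam y & wbr x y <> wzero]) /\
  (forall I, O_ideal lam I ->
     (forall x, I x -> x = wzero) \/ (forall x, inO lam x -> I x)).

End Witt.

(* Main.v *)
Require Import Defs.
From HB Require Import structures.
From mathcomp Require Import all_boot all_order all_algebra.
From mathcomp Require Import finmap.
From mathcomp Require Import ring.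
Set Implicit Arguments. Unset Strict Implicit. Unset Printing Implicit Defensive.
Import Order.TTheory GRing.Theory Num.Theory.
Local Open Scope ring_scope.

Section S.
Variable k : fieldType.
Implicit Types (f g : Witt k).

Lemma wzeroE n : wzero k n = 0.
Proof. by rewrite /wzero fsfunE. Qed.

Lemma waddE f g n : wadd f g n = f n + g n.
Proof.
rewrite /wadd fsfunE in_fsetU !mem_finsupp.
by case: (f n =P 0) => [->|] /=; case: (g n =P 0) => [->|] //=; rewrite addr0.
Qed.

Lemma wscaleE c f n : wscale c f n = c * f n.
Proof. rewrite /wscale fsfunE mem_finsupp; by case: (f n =P 0) => [->|]; rewrite ?mulr0. Qed.

Lemma LbE m n : Lb k m n = (n == m)%:R.
Proof. by rewrite /Lb fsfunE in_fset1; case: eqP. Qed.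

Lemma wsumE (s : seq (Witt k)) n : wsum s n = \sum_(x <- s) x n.
Proof. elim: s => [|x s IH]; first by rewrite big_nil /= wzeroE. by rewrite big_cons /= waddE IH. Qed.

Lemma big_sup (S : {fset int}) (r : seq int) (F : int -> k) :
  uniq r -> {subset S <= r} -> (forall a, a \notin S -> F a = 0) ->
  \sum_(a <- S) F a = \sum_(a <- r) F a.
Proof.
move=> ur Sr F0.
have -> : \sum_(a <- r) F a = \sum_(a <- r | a \in S) F a.
  rewrite [RHS]big_mkcond /=; apply: eq_bigr => a _.
  by case: ifP => // /negbT /F0.
rewrite -[RHS]big_filter; apply: perm_big; apply: uniq_perm.
- exact: fset_uniq.
- exact: filter_uniq.
by move=> a; rewrite mem_filter; case aS: (a \in S) => //=; rewrite Sr.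
Qed.

Lemma sum_pick (T : eqType) (r : seq T) (c : T) (F : T -> k) :
  uniq r -> c \in r -> \sum_(b <- r | b == c) F b = F c.
Proof.
move=> ur cr; rewrite -big_filter.
have -> : [seq b <- r | b == c] = [:: c].
  by rewrite -(filter_pred1_uniq ur cr); apply: eq_filter => b /=; rewrite eq_sym.
by rewrite big_seq1.
Qed.

Lemma wbrE f g N (r : seq int) : uniq r -> {subset finsupp f <= r} ->
  wbr f g N = \sum_(a <- r) (a - (N - a))%:~R * f a * g (N - a).
Proof.
move=> ur fr; rewrite /wbr fsfunE.
have inner : forall a, \sum_(b <- finsupp g | a + b == N) (a - b)%:~R * f a * g b
     = (a - (N - a))%:~R * f a * g (N - a).
  move=> a; case gN : (N - a \in finsupp g).
    rewrite (eq_bigl (fun b => b == N - a)); first by rewrite sum_pick // fset_uniq.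
    by move=> b /=; rewrite [RHS]eq_sym subr_eq [RHS]eq_sym (addrC b).
  rewrite big1_seq; last first.
    by move=> b /andP [/eqP Eb bg]; rewrite -Eb (addrC a b) addrK bg in gN.
  by rewrite [g _]fsfun_dflt ?gN // mulr0.
case: ifP => NI.
  under eq_bigr do rewrite inner.
  apply: big_sup => // a; rewrite mem_finsupp negbK => /eqP ->.
  by rewrite mulr0 mul0r.
rewrite big1_seq // => a _.
case fa : (f a == 0); first by rewrite (eqP fa) mulr0 mul0r.
case ga : (g (N - a) == 0); first by rewrite (eqP ga) mulr0.
move: NI; have : N \in [fset (a + b)%R | a in finsupp f, b in finsupp g]%fset.
  have -> : N = a + (N - a) by rewrite addrC subrK.
  by apply: in_imfset2; rewrite /= mem_finsupp ?fa ?ga.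
by move=> ->.
Qed.


Lemma big_sup2 (r r' : seq int) (F : int -> k) :
  uniq r -> uniq r' -> (forall a, F a != 0 -> (a \in r) && (a \in r')) ->
  \sum_(a <- r) F a = \sum_(a <- r') F a.
Proof.
move=> ur ur' H.
have E : forall s : seq int,
    \sum_(a <- s) F a = \sum_(a <- [seq a <- s | F a != 0]) F a.
  move=> s; rewrite big_filter [RHS]big_mkcond /=; apply: eq_bigr => a _.
  by case: eqP.
rewrite E [RHS]E; apply: perm_big; apply: uniq_perm; rewrite ?filter_uniq //.
move=> a; rewrite !mem_filter; case: (F a =P 0) => //= /eqP /H /andP [-> ->] //.
Qed.

Variable lam : k.

Definition w (j : int) : k :=
  if (2 %| j)%Z then 0 else j%:~R * lam ^ ((j + 1) %/ 2)%Z.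

Definition psi (x : Witt k) : k := \sum_(m <- finsupp x) w m * x m.

Lemma psiE x (r : seq int) : uniq r -> {subset finsupp x <= r} ->
  psi x = \sum_(m <- r) w m * x m.
Proof.
move=> ur xr; apply: big_sup => // a; rewrite mem_finsupp negbK => /eqP ->.
by rewrite mulr0.
Qed.

Lemma psi_add x y : psi (wadd x y) = psi x + psi y.
Proof.
pose r := (finsupp x `|` finsupp y)%fset.
have ur : uniq r by apply: fset_uniq.
rewrite (@psiE (wadd x y) r) // ?(@psiE x r) // ?(@psiE y r) //.
- by rewrite -big_split /=; apply: eq_bigr => a _; rewrite waddE mulrDr.
- by move=> a ay; rewrite in_fsetU ay orbT.
- by move=> a ax; rewrite in_fsetU ax.
move=> a; rewrite mem_finsupp waddE in_fsetU !mem_finsupp.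
by case: (x a =P 0) => [->|] //=; rewrite add0r.
Qed.

Lemma psi_scale c x : psi (wscale c x) = c * psi x.
Proof.
rewrite (@psiE (wscale c x) (finsupp x)) ?fset_uniq //.
  by rewrite /psi big_distrr /=; apply: eq_bigr => a _; rewrite wscaleE; ring.
move=> a; rewrite !mem_finsupp wscaleE.
by case: (x a =P 0) => [->|] //=; rewrite mulr0 eqxx.
Qed.

Lemma psi_zero : psi (wzero k) = 0.
Proof. by rewrite (@psiE _ [::]) ?big_nil // => a; rewrite mem_finsupp wzeroE eqxx. Qed.

Lemma psi_wbr f g (r1 r2 : seq int) : uniq r1 -> uniq r2 ->
  {subset finsupp f <= r1} -> {subset finsupp g <= r2} ->
  psi (wbr f g) = \sum_(a <- r1) \sum_(b <- r2) w (a + b) * ((a - b)%:~R * f a * g b).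
Proof.
move=> u1 u2 s1 s2.
pose Img := [fset (a + b)%R | a in finsupp f, b in finsupp g]%fset.
have ImgP : forall a b, f a != 0 -> g b != 0 -> a + b \in Img.
  by move=> a b fa gb; apply: in_imfset2; rewrite /= mem_finsupp.
rewrite (@psiE _ Img) ?fset_uniq //; last first.
  move=> N; rewrite mem_finsupp /wbr fsfunE; case: ifP => //; by rewrite eqxx.
under eq_bigr => N _ do rewrite (@wbrE f g N r1) // big_distrr /=.
rewrite exchange_big /=; apply: eq_bigr => a _.
set H := fun N => w N * ((a - (N - a))%:~R * f a * g (N - a)).
transitivity (\sum_(N <- [seq a + b | b <- r2]) H N); last first.
  by rewrite big_map; apply: eq_bigr => b _; rewrite /H (addrC a b) addrK.
apply: big_sup2; rewrite ?fset_uniq ?map_inj_uniq //; first exact: addrI.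
move=> N; rewrite /H; case: (f a =P 0) => [->|/eqP fa]; first by rewrite mulr0 mul0r mulr0 eqxx.
case: (g (N - a) =P 0) => [->|/eqP ga]; first by rewrite !mulr0 eqxx.
move=> _; apply/andP; split.
  by have := ImgP _ _ fa ga; rewrite addrC subrK.
apply/mapP; exists (N - a); first by apply: s2; rewrite mem_finsupp.
by rewrite addrC subrK.
Qed.


Lemma dvd2_shift (x y : int) : (2 %| x + y * 2)%Z = (2 %| x)%Z.
Proof. by rewrite rpredDr // dvdz_mull // dvdzz. Qed.

Lemma w_odd (q : int) : w (q * 2 + 1) = (q * 2 + 1)%:~R * lam ^ (q + 1).
Proof.
rewrite /w [X in (2 %| X)%Z]addrC dvd2_shift /=.
have -> : q * 2 + 1 + 1 = (q + 1) * 2 by ring.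
by rewrite mulzK.
Qed.

Lemma w_even (q : int) : w (q * 2) = 0.
Proof. by rewrite /w dvdz_mull // dvdzz. Qed.

Lemma key (N M : int) : lam != 0 ->
  w (N + M) * (N - M)%:~R - w (N - M) * ((N + M)%:~R * lam ^ M)
  + w (- N + M) * ((- N - M)%:~R * - lam ^ N)
  + w (- N - M) * ((- N + M)%:~R * (lam ^ N * lam ^ M)) = 0.
Proof.
move=> l0.
have [q Hq] : exists q, N + M = q * 2 \/ N + M = q * 2 + 1.
  exists ((N + M) %/ 2)%Z; rewrite {1 3}(divz_eq (N + M) 2).
  have := modz_ge0 (N + M) (isT : (2 : int) != 0).
  have := ltz_pmod (N + M) (isT : (0 : int) < 2).
  case: ((N + M) %% 2)%Z => [[|[|j]]|j] //= _ _; rewrite ?addr0; by [left | right].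
have -> : N = q * 2 - M + (N + M - q * 2) by ring.
case: Hq => ->; rewrite ?subrr ?addr0.
  have -> : q * 2 - M + M = q * 2 by ring.
  have -> : q * 2 - M - M = (q - M) * 2 by ring.
  have -> : - (q * 2 - M) + M = (M - q) * 2 by ring.
  have -> : - (q * 2 - M) - M = (- q) * 2 by ring.
  by rewrite !w_even; ring.
have -> : q * 2 - M + (q * 2 + 1 - q * 2) + M = q * 2 + 1 by ring.
have -> : q * 2 - M + (q * 2 + 1 - q * 2) - M = (q - M) * 2 + 1 by ring.
have -> : - (q * 2 - M + (q * 2 + 1 - q * 2)) + M = (M - q - 1) * 2 + 1 by ring.
have -> : - (q * 2 - M + (q * 2 + 1 - q * 2)) - M = (- q - 1) * 2 + 1 by ring.
rewrite !w_odd.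
have -> : q * 2 - M + (q * 2 + 1 - q * 2) = q + q + 1 - M by ring.
have -> : M - q - 1 + 1 = M + - q by ring.
have -> : - q - 1 + 1 = - q by ring.
have -> : q - M + 1 = q + 1 + - M by ring.
rewrite !expfzDr // -!invr_expz.
have hq : lam ^ q != 0 by rewrite expfz_neq0.
have hM : lam ^ M != 0 by rewrite expfz_neq0.
rewrite (_ : lam ^ 1 = lam) //.

field.
by rewrite hq hM.
Qed.

Lemma OgenE (n : nat) a : Ogen lam n a = (a == n%:Z)%:R - lam ^+ n * (a == - n%:Z)%:R.
Proof. by rewrite /Ogen waddE wscaleE !LbE mulNr. Qed.

Lemma Ogen_supp (n : nat) : {subset finsupp (Ogen lam n) <= [:: n%:Z; - n%:Z]}.
Proof.
move=> a; rewrite mem_finsupp OgenE !inE.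
by case: (a =P n%:Z) => //= _; case: (a =P - n%:Z) => //= _; rewrite mulr0 subr0 eqxx.
Qed.

Lemma Ogen_uniq (n : nat) : uniq [:: (n.+1)%:Z; - (n.+1)%:Z].
Proof. by []. Qed.

Lemma psi_gen (n m : nat) : lam != 0 -> psi (wbr (Ogen lam n.+1) (Ogen lam m.+1)) = 0.
Proof.
move=> l0.
rewrite (@psi_wbr _ _ _ _ (Ogen_uniq n) (Ogen_uniq m) (@Ogen_supp _) (@Ogen_supp _)).
rewrite !big_cons !big_nil !OgenE /= !eqxx /= !mulr0 !subr0 !sub0r !mulr1 !addr0 !opprK.
have := key n.+1 m.+1 l0; rewrite -!exprnP => H; rewrite -[RHS]H; ring.
Qed.


Lemma supp_wadd (x y : Witt k) : {subset finsupp (wadd x y) <= (finsupp x `|` finsupp y)%fset}.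
Proof.
move=> a; rewrite mem_finsupp waddE in_fsetU !mem_finsupp.
by case: (x a =P 0) => [->|] //=; rewrite add0r.
Qed.

Lemma supp_wscale c (x : Witt k) : {subset finsupp (wscale c x) <= finsupp x}.
Proof.
move=> a; rewrite !mem_finsupp wscaleE.
by case: (x a =P 0) => [->|] //=; rewrite mulr0 eqxx.
Qed.

Lemma supp_wzero : {subset finsupp (wzero k) <= [::]}.
Proof. by move=> a; rewrite mem_finsupp wzeroE eqxx. Qed.

Lemma psi_wbr_addl f1 f2 g : psi (wbr (wadd f1 f2) g) = psi (wbr f1 g) + psi (wbr f2 g).
Proof.
pose r := (finsupp f1 `|` finsupp f2)%fset.
have ur : uniq r by apply: fset_uniq.
have ug : uniq (finsupp g) by apply: fset_uniq.
rewrite (@psi_wbr _ _ r _ ur ug (@supp_wadd _ _)) //.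
rewrite (@psi_wbr _ _ r _ ur ug) //; last by move=> a ay; rewrite in_fsetU ay.
rewrite (@psi_wbr _ _ r _ ur ug) //; last by move=> a ay; rewrite in_fsetU ay orbT.
rewrite -big_split /=; apply: eq_bigr => a _; rewrite -big_split /=.
by apply: eq_bigr => b _; rewrite waddE; ring.
Qed.

Lemma psi_wbr_addr f g1 g2 : psi (wbr f (wadd g1 g2)) = psi (wbr f g1) + psi (wbr f g2).
Proof.
pose r := (finsupp g1 `|` finsupp g2)%fset.
have ur : uniq r by apply: fset_uniq.
have uf : uniq (finsupp f) by apply: fset_uniq.
rewrite (@psi_wbr _ _ _ r uf ur _ (@supp_wadd _ _)) //.
rewrite (@psi_wbr _ _ _ r uf ur) //; last by move=> a ay; rewrite in_fsetU ay.
rewrite (@psi_wbr _ _ _ r uf ur) //; last by move=> a ay; rewrite in_fsetU ay orbT.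
rewrite -big_split /=; apply: eq_bigr => a _; rewrite -big_split /=.
by apply: eq_bigr => b _; rewrite waddE; ring.
Qed.

Lemma psi_wbr_scalel c f g : psi (wbr (wscale c f) g) = c * psi (wbr f g).
Proof.
have uf : uniq (finsupp f) by apply: fset_uniq.
have ug : uniq (finsupp g) by apply: fset_uniq.
rewrite (@psi_wbr _ _ _ _ uf ug (@supp_wscale _ _)) // (@psi_wbr _ _ _ _ uf ug) //.
rewrite mulr_sumr; apply: eq_bigr => a _; rewrite mulr_sumr; apply: eq_bigr => b _.
by rewrite wscaleE; ring.
Qed.

Lemma psi_wbr_scaler c f g : psi (wbr f (wscale c g)) = c * psi (wbr f g).
Proof.
have uf : uniq (finsupp f) by apply: fset_uniq.
have ug : uniq (finsupp g) by apply: fset_uniq.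
rewrite (@psi_wbr _ _ _ _ uf ug _ (@supp_wscale _ _)) // (@psi_wbr _ _ _ _ uf ug) //.
rewrite mulr_sumr; apply: eq_bigr => a _; rewrite mulr_sumr; apply: eq_bigr => b _.
by rewrite wscaleE; ring.
Qed.

Lemma psi_wbr_zerol g : psi (wbr (wzero k) g) = 0.
Proof.
have ug : uniq (finsupp g) by apply: fset_uniq.
by rewrite (@psi_wbr _ _ [::] _ isT ug supp_wzero) // big_nil.
Qed.

Lemma psi_wbr_zeror f : psi (wbr f (wzero k)) = 0.
Proof.
have uf : uniq (finsupp f) by apply: fset_uniq.
rewrite (@psi_wbr _ _ _ [::] uf isT _ supp_wzero) //.
by rewrite big1 // => a _; rewrite big_nil.
Qed.

Lemma psi_inOl f g : inO lam f -> (forall n, psi (wbr (Ogen lam n.+1) g) = 0) ->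
  psi (wbr f g) = 0.
Proof.
move=> [s ->] H; elim: s => [|p s IH] /=; first exact: psi_wbr_zerol.
by rewrite psi_wbr_addl psi_wbr_scalel H IH mulr0 addr0.
Qed.

Lemma psi_inOr f g : inO lam g -> (forall n, psi (wbr f (Ogen lam n.+1)) = 0) ->
  psi (wbr f g) = 0.
Proof.
move=> [s ->] H; elim: s => [|p s IH] /=; first exact: psi_wbr_zeror.
by rewrite psi_wbr_addr psi_wbr_scaler H IH mulr0 addr0.
Qed.

Lemma psi_inO f g : lam != 0 -> inO lam f -> inO lam g -> psi (wbr f g) = 0.
Proof.
move=> l0 hf hg; apply: psi_inOl => // n; apply: psi_inOr => // m.
exact: psi_gen.
Qed.

Lemma psi_wsum (s : seq (Witt k)) : psi (wsum s) = \sum_(x <- s) psi x.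
Proof.
elim: s => [|x s IH]; first by rewrite big_nil psi_zero.
by rewrite big_cons /= psi_add IH.
Qed.


Definition Pp (x : Witt k) := forall a : int, x (- a) = - (lam ^ a) * x a.

Lemma P_zero : Pp (wzero k).
Proof. by move=> a; rewrite !wzeroE mulr0. Qed.

Lemma P_add (x y : Witt k) : Pp x -> Pp y -> Pp (wadd x y).
Proof. by move=> hx hy a; rewrite !waddE hx hy mulrDr. Qed.

Lemma P_scale c (x : Witt k) : Pp x -> Pp (wscale c x).
Proof. by move=> hx a; rewrite !wscaleE hx; ring. Qed.

Lemma P_Ogen n : lam != 0 -> Pp (Ogen lam n.+1).
Proof.
move=> l0 a; rewrite !OgenE !eqr_oppLR opprK.
have hn : (n.+1%:Z == - n.+1%:Z) = false by [].
have hn' : (- n.+1%:Z == n.+1%:Z) = false by rewrite eq_sym.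
case: (eqVneq a n.+1) => [->|an].
  by rewrite hn /= -exprnP; ring.
case: (eqVneq a (- n.+1%:Z)) => [->|an2].
  rewrite /= -exprnN.
  have : lam ^+ n.+1 != 0 by rewrite expf_neq0.
  move=> h; field; exact: h.
rewrite /=; ring.
Qed.

Lemma inO_P (x : Witt k) : lam != 0 -> inO lam x -> Pp x.
Proof.
move=> l0 [s ->]; elim: s => [|p s IH] /=; first exact: P_zero.
by apply: P_add => //; apply: P_scale; apply: P_Ogen.
Qed.

Lemma P_wbr f g : lam != 0 -> Pp f -> Pp g -> Pp (wbr f g).
Proof.
move=> l0 hf hg N.
have uf : uniq (finsupp f) by apply: fset_uniq.
rewrite (@wbrE f g (- N) _ uf) // (@wbrE f g N _ uf) //.
set F := fun a => (a - (- N - a))%:~R * f a * g (- N - a).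
transitivity (\sum_(a <- [seq - b | b <- finsupp f]) F a).
  apply: big_sup2 => //; first by rewrite map_inj_uniq //; exact: oppr_inj.
  move=> a; rewrite /F; case: (f a =P 0) => [->|/eqP fa]; first by rewrite mulr0 mul0r eqxx.
  move=> _; rewrite mem_finsupp fa /=.
  apply/mapP; exists (- a); last by rewrite opprK.
  rewrite mem_finsupp hf mulf_eq0 negb_or fa andbT oppr_eq0.
  by rewrite expfz_neq0.
rewrite big_map mulr_sumr; apply: eq_bigr => a _; rewrite /F.
rewrite hf (_ : - N - - a = - (N - a)); last by ring.
rewrite hg.
have E : lam ^ (N - a) = lam ^ N / lam ^ a by rewrite expfzDr // invr_expz.
rewrite E; field.
by rewrite expfz_neq0.
Qed.

Lemma sum_ind (M j : nat) (F : nat -> k) :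
  \sum_(i <- iota 0 M) F i * (j == i)%:R = if (j < M)%N then F j else 0.
Proof.
rewrite (eq_bigr (fun i => if i == j then F i else 0)); last first.
  by move=> i _; rewrite eq_sym; case: eqP; rewrite ?mulr1 ?mulr0.
rewrite -big_mkcond /=; case: ifP => jM.
  by rewrite sum_pick ?iota_uniq // mem_iota.
rewrite big1_seq // => i /andP [/eqP -> ]; rewrite mem_iota jM.
by rewrite andbF.
Qed.

Lemma P_inO (x : Witt k) : (2%:R : k) != 0 -> Pp x -> inO lam x.
Proof.
move=> h2 hx.
have x0 : x 0 = 0.
  have := hx 0; rewrite oppr0 expr0z mulN1r => /eqP; rewrite -subr_eq0 opprK -mulr2n.
  by rewrite -mulr_natl mulf_eq0 (negPf h2) => /eqP.
pose M := (\max_(a <- finsupp x) `|a|)%N.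
have big : forall a, (M < `|a|)%N -> x a = 0.
  move=> a; case: (x a =P 0) => // /eqP xa.
  have : (`|a| <= M)%N by apply: (@leq_bigmax_seq _ _ xpredT (fun a : int => `|a|%N)); rewrite ?mem_finsupp.
  by rewrite leqNgt => /negPf ->.
exists [seq (x (Posz i.+1), i) | i <- iota 0 M].
apply/fsfunP => a; rewrite wsumE -map_comp big_map /=.
under eq_bigr do rewrite wscaleE OgenE /=.
case: a => [[|j]|j].
- by rewrite x0 big1 // => i _; rewrite /= !mulr0 subr0 mulr0.
- rewrite (eq_bigr (fun i => x (Posz i.+1) * (j == i)%:R)); last first.
    move=> i _; have -> : (Posz j.+1 == Posz i.+1) = (j == i) by [].
    have -> : (Posz j.+1 == - Posz i.+1) = false by [].
    by rewrite mulr0 subr0.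
  rewrite sum_ind; case: ifP => // /negbT; rewrite -leqNgt => jM.
  by apply: big.
- rewrite (eq_bigr (fun i => (- lam ^+ i.+1 * x (Posz i.+1)) * (j == i)%:R)); last first.
    move=> i _; have -> : (Negz j == Posz i.+1) = false by [].
    have -> : (Negz j == - Posz i.+1) = (j == i) by [].
    by rewrite /=; ring.
  rewrite sum_ind; case: ifP => [_|/negbT]; last first.
    by rewrite -leqNgt => jM; apply: big.
  by rewrite (_ : Negz j = - Posz j.+1) // hx exprnP.
Qed.


Lemma inO_Ogen n : inO lam (Ogen lam n.+1).
Proof.
exists [:: (1, n)]; apply/fsfunP => a.
by rewrite /= waddE wscaleE wzeroE mul1r addr0.
Qed.

Lemma psi_Ogen1 : psi (Ogen lam 1) = 2%:R * lam.
Proof.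
rewrite (@psiE _ _ (Ogen_uniq 0) (@Ogen_supp 1)) !big_cons big_nil !OgenE /=.
rewrite /w /=.
rewrite (_ : ((1%Z + 1) %/ 2)%Z = 1) // (_ : ((- 1%Z + 1) %/ 2)%Z = 0) //.
rewrite expr0z (_ : lam ^ 1 = lam) //; ring.
Qed.

Lemma psi_Ogen2 : psi (Ogen lam 2) = 0.
Proof.
rewrite (@psiE _ _ (Ogen_uniq 1) (@Ogen_supp 2)) !big_cons big_nil.
by rewrite /w /= !mul0r !addr0.
Qed.

Lemma two_neq0 : [pchar k] =i pred0 -> (2%:R : k) != 0.
Proof.
move=> hc; apply/negP => h2; have := hc 2%N; rewrite !inE /= h2 //.
Qed.


End S.

Theorem corollary4p19 (k : fieldType) (hchar : [pchar k] =i pred0)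
  (lam : k) (hlam : lam != 0) :
  ~ O_perfect lam /\ ~ O_simple lam.
Proof.
have h2 := two_neq0 hchar.
have p1 : psi lam (Ogen lam 1) != 0 by rewrite psi_Ogen1 mulf_neq0.
split.
  move=> hp; have [s [hs E]] := (hp _).1 (inO_Ogen lam 0).
  move: p1; rewrite E psi_wsum big_map big1_seq ?eqxx // => p /andP [_ ps].
  by have [a b] := hs p ps; apply: psi_inO.
move=> [_ hs].
pose I := fun x : Witt k => inO lam x /\ psi lam x = 0.
have hI : O_ideal lam I.
  split.
  - by move=> x [].
  - by split; [exists [::] | exact: psi_zero].
  - move=> x y [hx px] [hy py]; split; last by rewrite psi_add px py addr0.
    by apply: P_inO => //; apply: P_add; apply: inO_P.
  - move=> c x [hx px]; split; last by rewrite psi_scale px mulr0.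
    by apply: P_inO => //; apply: P_scale; apply: inO_P.
  - move=> x y hx [hy py]; split; last exact: psi_inO.
    by apply: P_inO => //; apply: P_wbr => //; apply: inO_P.
case: (hs I hI) => H.
  have := H (Ogen lam 2) (conj (inO_Ogen lam 1) (psi_Ogen2 lam)).
  move=> /fsfunP /(_ 2); rewrite OgenE wzeroE /= mulr0 subr0 => /eqP.
  by rewrite oner_eq0.
by have [_] := H _ (inO_Ogen lam 0); apply/eqP.
Qed.
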